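(* Let $T\in\mathbb{N}_+$, $R\ge1$ and $N>0$ with $(N/R)^{1/T}>4$. Let $\mathcal{Q}$ be the set of sequences $Q=(Q^{(1)},\dots,Q^{(T)})\in\mathbb{R}_+^T$ with $Q^{(1)}\le Q^{(2)}\le\dots\le Q^{(T)}$, $Q^{(1)}\ge R$, and $\sum_{s=1}^TQ^{(s)}\ge N$. For $Q\in\mathcal{Q}$ and $S\subseteq[T]$ define $\phi_Q(\emptyset)=R$ and $\phi_Q(S)=\sum_{s\in S}Q^{(s)}$ for $S\ne\emptyset$. Then $$\inf_{Q\in\mathcal{Q}}\ \sup_{x\in[R,N]}\ \min_{S\subseteq[T]:\ \phi_Q(S)>x}\frac{\phi_Q(S)}{x}\ \ge\ \frac18\Big(\frac{N}{R}\Big)^{1/T},$$ with the convention that a minimum over an empty set is $+\infty$. *)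

(* Defs.v *)
From HB Require Import structures.
From mathcomp Require Import all_boot all_order all_algebra.
From mathcomp Require Import all_classical all_reals all_analysis.
Set Implicit Arguments. Unset Strict Implicit. Unset Printing Implicit Defensive.
Import Order.TTheory GRing.Theory Num.Theory.
Local Open Scope ring_scope.
Local Open Scope classical_set_scope.

(* Indices [T] = {1,...,T} are represented by 'I_T = {0,...,T-1};
   Q^{(s)} is Q (s-1). *)

Definition admissibleQ {R : realType} (T : nat) (r N : R) : set ('I_T -> R) :=
  [set Q | (forall s, 0 < Q s)
         /\ (forall s t : 'I_T, (s <= t)%N -> Q s <= Q t)
         /\ (forall s : 'I_T, val s = 0%N -> r <= Q s)
         /\ N <= \sum_(s < T) Q s].

Definition phiQ {R : realType} (T : nat) (r : R) (Q : 'I_T -> R)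
  (S : {set 'I_T}) : R :=
  if S == finset.set0 then r else \sum_(s in S) Q s.

Definition ratioMin {R : realType} (T : nat) (r : R) (Q : 'I_T -> R) (x : R)
  : \bar R :=
  \big[mine/+oo%E]_(S : {set 'I_T} | x < phiQ r Q S) ((phiQ r Q S / x)%:E).

Definition supRatio {R : realType} (T : nat) (r N : R) (Q : 'I_T -> R) : \bar R :=
  ereal_sup [set ratioMin r Q x | x in `[r, N]].

(* Main.v *)
Require Import Defs.
From HB Require Import structures.
From mathcomp Require Import all_boot all_order all_algebra.
From mathcomp Require Import all_classical all_reals all_analysis.
From mathcomp Require Import ring lra.
Import Order.TTheory GRing.Theory Num.Theory.
Local Open Scope ring_scope.
Local Open Scope classical_set_scope.

Lemma ratioMin_ge (R : realType) (T : nat) (r : R) (Q : 'I_T -> R) (x y : R) :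
  0 < x -> (forall S, x < phiQ r Q S -> y <= phiQ r Q S) ->
  ((y / x)%:E <= ratioMin r Q x)%E.
Proof.
move=> x0 H; rewrite /ratioMin.
elim/big_rec: _ => [|S v HS Hv]; first exact: leey.
rewrite le_min Hv andbT lee_fin ler_pM2r ?invr_gt0 //; exact: H.
Qed.

Theorem mainTheorem13 (R : realType) (T : nat) (r N : R)
  (hT : (0 < T)%N) (hr : 1 <= r) (hN : 0 < N)
  (hNR : 4 < (N / r) `^ (T%:R)^-1) :
  ((8^-1 * (N / r) `^ (T%:R)^-1)%R%:E <=
   ereal_inf [set supRatio r N Q | Q in @admissibleQ R T r N])%E.
Proof.
set c := (N / r) `^ (T%:R)^-1.
set a := 8^-1 * c.
have c4 : 4 < c := hNR.
have ha : a = 8^-1 * c by [].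
have a0 : 0 < a by rewrite ha; lra.
clearbody a.
have r0 : 0 < r by apply: lt_le_trans hr.
have cT : c ^+ T = N / r.
  rewrite -powR_mulrn ?powR_ge0 // -powRrM mulVf ?pnatr_eq0 -?lt0n //.
  by rewrite powRr1 // divr_ge0 // ltW.
apply: le_ereal_inf_tmp => _ [Q [Qpos [Qmon [Q0 QN]]] <-].
have [[x /andP[xr xN] hx]|hno] :=
  pselect (exists2 x, r <= x <= N & (a%:E <= ratioMin r Q x)%E).
  apply: le_trans hx _; apply: ereal_sup_ubound; exists x => //.
  by rewrite /= in_itv /= xr.
have Hlt : forall x, r <= x -> x <= N -> (ratioMin r Q x < a%:E)%E.
  move=> x h1 h2; rewrite ltNge; apply/negP => h; apply: hno; exists x => //.
  by rewrite h1 h2.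
pose i0 : 'I_T := Ordinal hT.
pose q (i : nat) := Q (insubd i0 i).
pose P (k : nat) := \sum_(i < k) q i.
have qQ : forall s : 'I_T, q s = Q s.
  by move=> s; rewrite /q; congr Q; apply: val_inj; rewrite val_insubd ltn_ord.
have qpos : forall k, 0 < q k by move=> k; apply: Qpos.
have qmon : forall i j, (i <= j)%N -> (j < T)%N -> q i <= q j.
  move=> i j ij jT; apply: Qmon; rewrite !val_insubd jT.
  by case: ifP => // _; rewrite (leq_trans ij).
have q0r : r <= q 0 by apply: Q0; rewrite val_insubd hT.
have PT : N <= P T.
  apply: le_trans QN _; rewrite /P le_eqVlt; apply/orP; left; apply/eqP.
  by apply: eq_bigr => s _; rewrite qQ.
have Pge : forall k, (0 < k)%N -> r <= P k.
  case=> // k _; rewrite /P big_ord_recl.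
  apply: le_trans q0r _; rewrite lerDl; apply: sumr_ge0 => i _; exact/ltW.
have sumge : forall (S : {set 'I_T}) s, s \in S -> Q s <= \sum_(t in S) Q t.
  move=> S s sS; rewrite (bigD1 s) //= lerDl; apply: sumr_ge0 => t _; exact/ltW.
have rN : r <= N.
  have : 1 <= c ^+ T by apply: exprn_ege1; lra.
  by rewrite cT ler_pdivlMr // mul1r.
have step1 : q 0 < a * r.
  have h := Hlt r (lexx r) rN.
  have h2 : ((q 0 / r)%:E <= ratioMin r Q r)%E.
    apply: ratioMin_ge => // S; rewrite /phiQ; case: ifP => [_|/set0Pn [s sS] _].
      by rewrite ltxx.
    apply: le_trans (sumge _ _ sS); rewrite -qQ; exact: qmon.
  by have := le_lt_trans h2 h; rewrite lte_fin ltr_pdivrMr.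
have step2 : forall k, (0 < k)%N -> (k < T)%N -> P k < N -> q k < a * P k.
  move=> k k0 kT PkN.
  have Pk0 : 0 < P k by apply: lt_le_trans (Pge _ k0).
  have h := Hlt (P k) (Pge _ k0) (ltW PkN).
  have h2 : ((q k / P k)%:E <= ratioMin r Q (P k))%E.
    apply: ratioMin_ge => // S; rewrite /phiQ; case: ifP => [_|/set0Pn [s0 sS0] hS].
      by rewrite ltNge Pge.
    have [[s sS ks]|no] := pselect (exists2 s, s \in S & (k <= s)%N).
      apply: le_trans (sumge _ _ sS); rewrite -qQ; exact: qmon.
    exfalso; move: hS; apply/negP; rewrite -leNgt.
    rewrite /P (big_ord_widen T q (ltnW kT)).
    rewrite big_mkcond [X in _ <= X]big_mkcond /=; apply: ler_sum => t _.
    case: ifP => tS.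
      have -> : (t < k)%N by rewrite ltnNge; apply/negP => kt; apply: no; exists t.
      by rewrite qQ.
    by case: ifP => _ //; exact/ltW.
  by have := le_lt_trans h2 h; rewrite lte_fin ltr_pdivrMr.
pose B n := a * r * (1 + a) ^+ n.
have Bpos : forall n, 0 < B n.
  move=> n; rewrite /B !mulr_gt0 // exprn_gt0 //; lra.
have BS : forall n, B n.+1 = (1 + a) * B n by move=> n; rewrite /B exprS; ring.
have ind : forall n, (n < T)%N -> P n.+1 < B n \/ N < B n.
  elim=> [_|n IH hn].
    by left; rewrite /P big_ord1 /B expr0 mulr1.
  have Bn := Bpos n; rewrite BS.
  have [IH1|IH2] := IH (ltnW hn); last by right; nra.
  have [PN|NP] := ltP (P n.+1) N; last by right; nra.
  have := step2 n.+1 isT hn PN.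
  have -> : P n.+2 = P n.+1 + q n.+1 by rewrite /P big_ord_recr.
  by left; nra.
have hT1 : (T.-1 < T)%N by rewrite ltn_predL.
have h : N < B T.-1.
  have [h|//] := ind T.-1 hT1.
  by rewrite prednK // in h; apply: le_lt_trans PT h.
have : B T.-1 <= a * r * c ^+ T.-1.
  rewrite /B ler_pM2l; last by rewrite mulr_gt0 //; lra.
  by apply: lerXn2r; rewrite ?nnegrE; lra.
have : c ^+ T = c * c ^+ T.-1 by rewrite -exprS prednK.
rewrite cT => e1 hB.
have hN' : N = r * (c * c ^+ T.-1) by rewrite -e1 mulrC divfK // gt_eqF.
have := lt_le_trans h hB; rewrite hN' ha.
have : 0 <= c ^+ T.-1 by apply: exprn_ge0; lra.
move=> ? ?; exfalso; nra.
Qed.
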